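(* Let $p\in\mathcal{P}$ and $\varphi\in\mathrm{Stab}_{G^*}(p)$. Then: (i) if $\varphi\in G$, all orbits of $\langle\varphi\rangle$ on $I$ have the same size $b=|\varphi|$ (the order of $\varphi$), and if $r$ is the number of orbits then $br=2n$; (ii) if $\varphi\in G^*\setminus G$, all orbits of $\langle\varphi\rangle$ on $I$ have the same size $b=|\varphi|$, $b$ is even, and if $r$ is the number of orbits then $br=2n$.
   Context: Fix $n\ge 2$, $W=\{1,\dots,n\}$, $M=\{n+1,\dots,2n\}$, $I=W\cup M$. Permutations compose right-to-left. A preference profile is a function $p$ on $I$ assigning to each $x\in W$ a linear order $p(x)$ on $M$ and to each $y\in M$ a linear order $p(y)$ on $W$; $\mathcal{P}$ is the set of preference profiles. $G^*=\{\varphi\in\mathrm{Sym}(I):\{\varphi(W),\varphi(M)\}=\{W,M\}\}$ and $G=\{\varphi\in\mathrm{Sym}(I):\varphi(W)=W,\ \varphi(M)=M\}$. For a linear order $R$ on $X\subseteq I$ and $\varphi\in\mathrm{Sym}(I)$, $\varphi R$ is the relation on $\varphi(X)$ with $(a,b)\in\varphi R$ iff $(\varphi^{-1}(a),\varphi^{-1}(b))\in R$. For $\varphi\in G^*$, $p^\varphi(z)=\varphi\,p(\varphi^{-1}(z))$, and $\mathrm{Stab}_{G^*}(p)=\{\varphi\in G^*:p^\varphi=p\}$. *)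

(* Defs.v *)
(* Agents I = {1..2n} are relabelled as 'I_(2*n) = {0..2n-1}:
   W = {0..n-1} (paper's 1..n), M = {n..2n-1} (paper's n+1..2n). *)
From mathcomp Require Import all_boot all_order all_fingroup.
Set Implicit Arguments. Unset Strict Implicit. Unset Printing Implicit Defensive.

Section Defs.
Variable n : nat.
Notation I := 'I_(2 * n).

Definition Wset : {set I} := [set i : I | i < n].
Definition Mset : {set I} := [set i : I | n <= i].

Definition linear_order_on (X : {set I}) (R : rel I) : Prop :=
  [/\ forall a b, R a b -> (a \in X) && (b \in X),
      forall a, a \in X -> R a a,
      forall a b, R a b -> R b a -> a = b,
      forall a b c, R a b -> R b c -> R a c
    & forall a b, a \in X -> b \in X -> R a b || R b a].

Definition is_profile (p : I -> rel I) : Prop :=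
  (forall x, x \in Wset -> linear_order_on Mset (p x)) /\
  (forall y, y \in Mset -> linear_order_on Wset (p y)).

Definition Gstar : {set {perm I}} :=
  [set phi : {perm I} | [set phi @: Wset; phi @: Mset] == [set Wset; Mset]].

Definition Gsub : {set {perm I}} :=
  [set phi : {perm I} | (phi @: Wset == Wset) && (phi @: Mset == Mset)].

Definition act_rel (phi : {perm I}) (R : rel I) : rel I :=
  fun a b => R ((phi^-1)%g a) ((phi^-1)%g b).

Definition act_prof (phi : {perm I}) (p : I -> rel I) : I -> rel I :=
  fun z => act_rel phi (p ((phi^-1)%g z)).

Definition in_stab (p : I -> rel I) (phi : {perm I}) : Prop :=
  phi \in Gstar /\ (forall z a b, act_prof phi p z a b = p z a b).

Definition cyc_orbits (phi : {perm I}) : {set {set I}} :=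
  [set orbit 'P <[phi]> x | x : I].

End Defs.

(* Main.v *)
Require Import Defs.
From mathcomp Require Import all_boot all_order all_fingroup.

Set Implicit Arguments. Unset Strict Implicit. Unset Printing Implicit Defensive.

Section Aux.
Variable T : finType.

Lemma perm_rel_fix (f : {perm T}) (R : rel T) a :
  (forall x y, R (f x) (f y) = R x y) ->
  (forall x y z, R x y -> R y z -> R x z) ->
  (forall x y, R x y -> R y x -> x = y) ->
  R a a -> R a (f a) -> f a = a.
Proof.
move=> pres tr anti Raa Rafa.
have H1 : forall j, R a ((f ^+ j)%g a).
  elim=> [|j IH]; first by rewrite expg0 perm1.
  rewrite expgSr permM; apply: tr Rafa _; by rewrite pres.
have := H1 (#[f]%g.-1); rewrite -pres -permM -expgSr prednK ?order_gt0 //.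
rewrite expg_order perm1 => Rfa. by apply: anti.
Qed.
End Aux.

Section Main.
Variable n : nat.
Notation I := 'I_(2 * n).
Variable p : I -> rel I.

Definition stabP (g : {perm I}) :=
  forall z a b, p ((g^-1)%g z) ((g^-1)%g a) ((g^-1)%g b) = p z a b.

Lemma stabP1 : stabP 1%g.
Proof. by move=> z a b; rewrite invg1 !perm1. Qed.

Lemma stabPM g h : stabP g -> stabP h -> stabP (g * h)%g.
Proof. by move=> Sg Sh z a b; rewrite invgM !permM Sg Sh. Qed.

Lemma stabPX g k : stabP g -> stabP (g ^+ k)%g.
Proof.
move=> Sg; elim: k => [|k IH]; first by rewrite expg0; apply: stabP1.
by rewrite expgS; apply: stabPM.
Qed.

Lemma fix_side (g : {perm I}) z X :
  stabP g -> linear_order_on X (p z) -> g z = z ->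
  forall y, y \in X -> g y = y.
Proof.
move=> Sg [supp refl anti tr tot] gz y yX.
set f := (g^-1)%g.
have fz : f z = z by rewrite -{1}gz /f -permM mulgV perm1.
have pres : forall a b, p z (f a) (f b) = p z a b.
  by move=> a b; rewrite -(Sg z a b) fz.
have fyX : f y \in X.
  by have := refl _ yX; rewrite -pres => /supp /andP[].
suff fy : f y = y by rewrite -{1}fy /f -permM mulVg perm1.
case/orP: (tot _ _ yX fyX) => H.
- exact: (perm_rel_fix pres tr anti (refl _ yX) H).
- have pres' : forall a b, (fun a b => p z b a) (f a) (f b) = (fun a b => p z b a) a b.
    by move=> a b /=; apply: pres.
  apply: (perm_rel_fix pres') => //=.
  + by move=> x1 y1 z1 H1 H2; apply: tr H2 H1.
  + by move=> x1 y1 H1 H2; apply: anti.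
  + exact: refl.
Qed.

Lemma stab_triv (g : {perm I}) z :
  is_profile p -> stabP g -> g z = z -> g = 1%g.
Proof.
move=> [PW PM] Sg gz.
have n0 : 0 < n by case: n z {gz} => [|m] [] //.
have nI : n < 2 * n by rewrite mul2n -addnn -{1}(addn0 n) ltn_add2l.
set y0 := Ordinal nI.
have y0M : y0 \in Mset n by rewrite inE.
have x0I : 0 < 2 * n by rewrite muln_gt0 n0.
set x0 := Ordinal x0I.
have x0W : x0 \in Wset n by rewrite inE.
have allW : (forall w, w \in Wset n -> g w = w) -> forall x, g x = x.
  move=> HW x; case: (boolP (x \in Wset n)) => xW; first exact: HW.
  apply: (fix_side Sg (PW _ x0W)); first exact: HW.
  by move: xW; rewrite !inE -leqNgt.
apply/permP => x; rewrite perm1; apply: allW => w wW.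
case: (boolP (z \in Wset n)) => zW.
  apply: (fix_side Sg (PM _ y0M)) => //.
  exact: (fix_side Sg (PW _ zW)).
have zM : z \in Mset n by move: zW; rewrite !inE -leqNgt.
exact: (fix_side Sg (PM _ zM)).
Qed.

Lemma orbit_card (phi : {perm I}) :
  is_profile p -> stabP phi ->
  (forall O, O \in cyc_orbits phi -> #|O| = #[phi]%g) /\
  #[phi]%g * #|cyc_orbits phi| = 2 * n.
Proof.
move=> Pp Sphi.
have H1 : forall O, O \in cyc_orbits phi -> #|O| = #[phi]%g.
  move=> O /imsetP [x _ ->].
  rewrite card_orbit.
  have -> : 'C_<[phi]>[x | 'P]%g = 1%g.
    apply/trivgP; apply/subsetP => g; rewrite inE => /andP [/cycleP [k ->]].
    move/astab1P => /= Hx; rewrite inE; apply/eqP.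
    exact: (stab_triv Pp (stabPX k Sphi) Hx).
  by rewrite indexg1.
split => //.
have Hp : partition (cyc_orbits phi) [set: I].
  have := @orbit_partition _ _ _ 'P <[phi]>%G [set: I].
  have -> : [set orbit 'P <[phi]>%G x | x in [set: I]] = cyc_orbits phi.
    by apply/setP => O; rewrite /cyc_orbits; apply/imsetP/imsetP => [][x _ ->]; exists x.
  apply; apply/actsP => g _ x; by rewrite !inE.
transitivity #|[set: I]|; last by rewrite cardsT card_ord.
rewrite (card_partition Hp).
rewrite (eq_bigr (fun _ => #[phi]%g)); last by move=> O /H1.
by rewrite sum_nat_const mulnC.
Qed.

End Main.

Theorem proposition15 (n : nat) (hn : 2 <= n)
    (p : 'I_(2 * n) -> rel 'I_(2 * n)) (phi : {perm 'I_(2 * n)}) :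
  is_profile p -> in_stab p phi ->
  (phi \in Gsub n ->
     (forall O, O \in cyc_orbits phi -> #|O| = #[phi]%g) /\
     #[phi]%g * #|cyc_orbits phi| = 2 * n) /\
  (phi \in Gstar n :\: Gsub n ->
     (forall O, O \in cyc_orbits phi -> #|O| = #[phi]%g) /\
     ~~ odd #[phi]%g /\
     #[phi]%g * #|cyc_orbits phi| = 2 * n).
Proof.
move=> Pp [Gs St].
have Sphi : stabP p phi by move=> z a b; apply: St.
have [Ho Hc] := orbit_card Pp Sphi.
split=> // /setDP [Hstar Hsub]; split=> //; split=> //.
have n0 : 0 < n by apply: leq_trans hn.
have nI : n < 2 * n by rewrite mul2n -addnn -{1}(addn0 n) ltn_add2l.
have x0I : 0 < 2 * n by rewrite muln_gt0 n0.
set y0 := Ordinal nI. set x0 := Ordinal x0I.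
move: Hstar; rewrite inE => /eqP E.
have AWM : phi @: Wset n \in [set Wset n; Mset n] by rewrite -E !inE eqxx.
have BWM : phi @: Mset n \in [set Wset n; Mset n] by rewrite -E !inE eqxx orbT.
have memI : forall (A : {set 'I_(2*n)}) x, (phi x \in phi @: A) = (x \in A).
  by move=> A x; rewrite mem_imset //; apply: perm_inj.
have inW : forall A : {set 'I_(2*n)}, phi @: A = Wset n -> forall x, x \in A -> phi x < n.
  by move=> A eA x xA; have := memI A x; rewrite eA xA inE.
have inM : forall A : {set 'I_(2*n)}, phi @: A = Mset n -> forall x, x \in A -> n <= phi x.
  by move=> A eA x xA; have := memI A x; rewrite eA xA inE.
have flip : forall x, (phi x < n) = ~~ (x < n).
  move: AWM BWM; rewrite !inE.
  case/orP => /eqP eA; case/orP => /eqP eB.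
  - have H1 := memI (Mset n) y0; rewrite eB -eA memI !inE in H1.
    by move: H1; rewrite ltnn leqnn.
  - by case/negP: Hsub; rewrite inE eA eB !eqxx.
  - move=> x; case: (ltnP x n) => xn.
      by rewrite ltnNge (inM _ eA) // inE.
    by rewrite (inW _ eB) // inE.
  - have H1 := memI (Wset n) x0; rewrite eA -eB memI !inE in H1.
    by move: H1; rewrite leqNgt /= n0.
have Hk : forall k x, ((phi ^+ k)%g x < n) = (x < n) (+) odd k.
  elim=> [|k IH] x; first by rewrite expg0 perm1 addbF.
  by rewrite expgSr permM flip IH /= addbN.
have := Hk #[phi]%g x0; rewrite expg_order perm1 /= n0.
by case: (odd _).
Qed.
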